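(* Let $\chi\geq 3$ and $m\geq 2$ be integers, let $T_\chi$ be any non-transitive tournament on $[\chi]$, and let $H=H(T_\chi,m)$. Let $n,t\geq 1$ be integers such that $\lfloor 3t/2\rfloor+1<n$. Then $R(P^{(3)}_{n,2},H)\geq (m-1)t+1$.
   Context: A tournament on $[\chi]$ is an orientation of the complete graph on $[\chi]$; it is transitive if acyclic. For a tournament $T_\chi$ on $[\chi]$ and $m\ge1$, $H(T_\chi,m)$ is the $3$-uniform hypergraph whose vertex set is partitioned into sets $A_1,\dots,A_\chi$ each of size $m$, with edge set $\{xyz: x,y\in A_i,\ z\in A_j,\ (i,j)\text{ an arc of }T_\chi\}$. $R(G,H)$ for 3-graphs is the least $N$ such that every red/blue colouring of the edges of $K^{(3)}_N$ contains a red copy of $G$ or a blue copy of $H$. The tight path $P^{(3)}_{n,2}$ has vertices $v_1,\dots,v_n$ and edges $\{v_i,v_{i+1},v_{i+2}\}$, $i\in[n-2]$. *)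

(* Defs.v *)
From mathcomp Require Import all_boot.
Set Implicit Arguments. Unset Strict Implicit. Unset Printing Implicit Defensive.

Definition uniform3 (V : finType) (E : {set {set V}}) : Prop :=
  forall e, e \in E -> #|e| = 3.

(* A red/blue colouring of the edges of K^(3)_N on vertex set 'I_N:
   c e = true means the triple e is red, false means blue
   (values on non-3-sets are irrelevant). *)
Definition colouring (N : nat) := {set 'I_N} -> bool.

Definition has_copy (N : nat) (c : colouring N) (col : bool)
    (V : finType) (E : {set {set V}}) : Prop :=
  exists f : V -> 'I_N, injective f /\ forall e, e \in E -> c (f @: e) = col.

Definition ramsey_prop (N : nat) (V1 : finType) (E1 : {set {set V1}})
    (V2 : finType) (E2 : {set {set V2}}) : Prop :=
  forall c : colouring N, has_copy c true E1 \/ has_copy c false E2.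

(* R(G,H) >= k  :<->  the least N with ramsey_prop N is at least k, i.e.
   every N with ramsey_prop N satisfies k <= N. *)
Definition ramsey_ge (k : nat) (V1 : finType) (E1 : {set {set V1}})
    (V2 : finType) (E2 : {set {set V2}}) : Prop :=
  forall N, ramsey_prop N E1 E2 -> k <= N.

Definition tight_path_edges (n : nat) : {set {set 'I_n}} :=
  [set e : {set 'I_n} | [exists i : 'I_n,
      (i.+2 < n) && (e == [set x : 'I_n | (i <= x) && (x <= i.+2)])]].

Definition tournament (chi : nat) (T : rel 'I_chi) : Prop :=
  (forall i, ~~ T i i) /\ (forall i j, i != j -> T i j (+) T j i).

(* Acyclic (= transitive tournament): no closed directed walk of positive length. *)
Definition acyclic (chi : nat) (T : rel 'I_chi) : Prop :=
  forall (x : 'I_chi) (p : seq 'I_chi), path T x p -> last x p = x -> p = [::].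

(* H(T_chi, m): vertex set 'I_chi * 'I_m, with A_i = {(i,k) : k < m};
   edges {x,y,z} with x,y distinct in A_i, z in A_j, (i,j) an arc of T. *)
Definition H_edges (chi m : nat) (T : rel 'I_chi) :
    {set {set ('I_chi * 'I_m)}} :=
  [set e : {set ('I_chi * 'I_m)} | [exists x, exists y, exists z,
      [&& x != y, x.1 == y.1, T x.1 z.1 & e == [set x; y; z]]]].

(* Main.v *)
Require Import Defs.
From mathcomp Require Import all_boot.
From mathcomp Require Import zify.
Set Implicit Arguments. Unset Strict Implicit. Unset Printing Implicit Defensive.

Definition blk (t N : nat) (v : 'I_N) : nat := v %/ t.

Definition col (t N : nat) : colouring N := fun e =>
  [exists u in e, [exists v in e, (u != v) && (blk t u == blk t v)
     && [forall w in e, blk t u <= blk t w]]].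

Lemma col_true t N (S : {set 'I_N}) u v : u \in S -> v \in S -> u != v ->
  blk t u = blk t v -> (forall w, w \in S -> blk t u <= blk t w) -> col t S.
Proof.
move=> uS vS uv e h; apply/existsP; exists u; rewrite uS /=.
apply/existsP; exists v; rewrite vS uv e eqxx /=.
apply/forallP => w; apply/implyP => /h; by rewrite e.
Qed.

Lemma red3 t N (a b c : 'I_N) : col t [set a; b; c] ->
  exists M, [/\ M <= blk t a, M <= blk t b, M <= blk t c &
    2 <= (blk t a == M) + (blk t b == M) + (blk t c == M)].
Proof.
move=> /existsP [u /andP [Hu /existsP [v /andP [Hv /andP [/andP [uv /eqP e] /forallP h]]]]].
have h' : forall w, w \in [set a; b; c] -> blk t u <= blk t w.
  by move=> w wS; have := h w; rewrite wS.
exists (blk t u); split; try (apply: h'; by rewrite !inE eqxx ?orbT).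
move: Hu Hv uv e; rewrite !inE => Hu Hv.
move: Hu Hv; rewrite -!orbA => /or3P [] /eqP-> /or3P [] /eqP->; rewrite ?eqxx // => _ e;
rewrite ?e ?eqxx; lia.
Qed.

Lemma wnd_shift x y z w M1 M2 :
  2 <= (x==M1)+(y==M1)+(z==M1) -> 2 <= (y==M2)+(z==M2)+(w==M2) ->
  M1 <= x -> M1 <= y -> M1 <= z -> M2 <= y -> M2 <= z -> M2 <= w -> M1 = M2.
Proof.
do 6!(case: eqP => ?); rewrite /=; lia.
Qed.

Lemma count_lb (b : nat -> nat) (mu n : nat) : 3 <= n ->
  (forall i, i.+2 < n -> 2 <= (b i == mu) + (b i.+1 == mu) + (b i.+2 == mu)) ->
  forall k, 0 < k <= n -> 2 * k <= 3 * (\sum_(j < k) ((b j == mu) : nat)) + 2.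
Proof.
move=> n3 W; elim/ltn_ind => k IH /andP [k0 kn].
case: (ltnP 3 k) => hk.
  have [j kj] : exists j, k = j.+3 by exists (k - 3); lia.
  subst k.
  rewrite !big_ord_recr /=.
  have := IH j (ltac:(lia)) (ltac:(apply/andP; lia)).
  have := W j (ltac:(lia)).
  move: (\sum_(i < j) _) => S. move: (b j == mu) (b j.+1 == mu) (b j.+2 == mu) => x y z. lia.
have := W 0 (ltac:(lia)).
case: k IH k0 kn hk => [|[|[|[|k]]]] // IH _ _ _;
rewrite !big_ord_recr big_ord0 /=; lia.
Qed.

Lemma block_card t N (tpos : 0 < t) mu :
  #|[set v : 'I_N | blk t v == mu]| <= t.
Proof.
have inj : {in [set v : 'I_N | blk t v == mu] &,
   injective (fun v : 'I_N => Ordinal (ltn_pmod v tpos))}.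
  move=> u v; rewrite !inE /blk => /eqP hu /eqP hv [] huv; apply: val_inj.
  by rewrite /= (divn_eq u t) (divn_eq v t) hu hv huv.
rewrite -(card_in_imset inj); apply: leq_trans (max_card _) _.
by rewrite card_ord.
Qed.

Theorem proposition1p13 (chi m : nat) (T : rel 'I_chi) (n t : nat) :
  3 <= chi -> 2 <= m ->
  tournament T -> ~ acyclic T ->
  1 <= n -> 1 <= t -> (3 * t)./2 + 1 < n ->
  ramsey_ge ((m - 1) * t + 1) (tight_path_edges n) (H_edges m T).
Proof.
move=> chi3 m2 tourT nacyc n1 tpos hn N HR.
case: (leqP ((m - 1) * t + 1) N) => // HN.
exfalso.
case: (HR (@col t N)) => [[f [finj fred]] | [g [ginj gblue]]].
- clear HR; move: f finj fred; case: n hn n1 => // n' hn _ f finj fred.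
  pose b i := blk t (f (inord i)).
  have W : forall i, i.+2 < n'.+1 -> exists M, [/\ M <= b i, M <= b i.+1, M <= b i.+2 &
    2 <= (b i == M) + (b i.+1 == M) + (b i.+2 == M)].
  { move=> i hi; apply: red3.
    have Hin : [set x : 'I_n'.+1 | (i <= x) && (x <= i.+2)] \in tight_path_edges n'.+1.
      rewrite inE; apply/existsP; exists (inord i); rewrite inordK ?hi ?eqxx //; lia.
    have Heq : [set x : 'I_n'.+1 | (i <= x) && (x <= i.+2)] =
       [set inord i; inord i.+1; inord i.+2].
      apply/setP => x; rewrite !inE -!val_eqE /= !inordK; lia.
    have := fred _ Hin; by rewrite Heq ?imsetU1 ?imsetU !imset_set1. }
  have [mu [h0 h1 h2 c0]] := W 0 (ltac:(lia)).
  have Wmu : forall i, i.+2 < n'.+1 -> [/\ mu <= b i, mu <= b i.+1, mu <= b i.+2 &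
    2 <= (b i == mu) + (b i.+1 == mu) + (b i.+2 == mu)].
  { elim => [|i IH] hi; first by [].
    have [g0 g1 g2 d0] := IH (ltac:(lia)).
    have [M [g0' g1' g2' d0']] := W i.+1 hi.
    have e := wnd_shift d0 d0' g0 g1 g2 g0' g1' g2'.
    by rewrite e. }
  have cnt := @count_lb b mu n'.+1 (ltac:(lia)) (fun i hi => let: And4 _ _ _ h := Wmu i hi in h)
     n'.+1 (ltac:(apply/andP; split; [by [] | exact: leqnn])).
  have cle : \sum_(j < n'.+1) ((b j == mu) : nat) <= t.
  { rewrite (eq_bigr (fun j : 'I_n'.+1 => ((blk t (f j) == mu) : nat))); last first.
      by move=> j _; rewrite /b inord_val.
    have -> : \sum_(j < n'.+1) ((blk t (f j) == mu) : nat) = #|[set j | blk t (f j) == mu]|.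
      rewrite -sum1_card [RHS]big_mkcond /=; apply: eq_bigr => j _; rewrite inE; by case: eqP.
    rewrite -(card_imset _ finj); apply: leq_trans (block_card N tpos mu).
    apply: subset_leq_card; apply/subsetP => v /imsetP [j]; rewrite inE => /eqP hj ->.
    by rewrite inE hj. }
  rewrite -divn2 in hn; lia.
- have hb : forall v : 'I_N, blk t v < m - 1.
    by move=> v; rewrite /blk ltn_divLR //; have := ltn_ord v; lia.
  have pig : forall i : 'I_chi, exists k1 k2 : 'I_m,
      k1 != k2 /\ blk t (g (i, k1)) = blk t (g (i, k2)).
  { move=> i; pose h (k : 'I_m) := Ordinal (hb (g (i, k))).
    case: (boolP [exists k1, exists k2, (k1 != k2) && (h k1 == h k2)]).
      move=> /existsP [k1 /existsP [k2 /andP [ne /eqP e]]]; exists k1, k2; split => //.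
      exact: (congr1 val e).
    move=> H; exfalso.
    have hinj : injective h.
      move=> x y e; apply/eqP; apply/negPn/negP => ne; move/negP: H; apply.
      by apply/existsP; exists x; apply/existsP; exists y; rewrite ne e eqxx.
    have := leq_card h hinj; rewrite !card_ord; lia. }
  pose phi (i : 'I_chi) := \max_(k < m) blk t (g (i, k)).
  have arc : forall i j, T i j -> phi j < phi i.
  { move=> i j tij; case: (pig i) => k1 [k2 [ne e]].
    have hz : forall k, blk t (g (j, k)) < blk t (g (i, k1)).
    { move=> k; rewrite ltnNge; apply/negP => le.
      have Hedge : [set (i, k1); (i, k2); (j, k)] \in H_edges m T.
        rewrite inE; apply/existsP; exists (i, k1); apply/existsP; exists (i, k2).
        apply/existsP; exists (j, k); rewrite /= eqxx tij eqxx andbT andbT.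
        by apply: contra ne => /eqP [->].
      have := gblue _ Hedge; rewrite ?imsetU1 ?imsetU !imset_set1.
      rewrite (@col_true t N _ (g (i, k1)) (g (i, k2))) //.
      + by rewrite !inE eqxx ?orbT.
      + by rewrite !inE eqxx ?orbT.
      + by rewrite (inj_eq ginj); apply: contra ne => /eqP [->].
      + move=> w; rewrite !inE -!orbA => /or3P [] /eqP -> //; by rewrite e. }
    have B0 : blk t (g (j, Ordinal (ltnW m2))) < blk t (g (i, k1)) := hz _.
    have h1 : phi j <= (blk t (g (i, k1))).-1.
      apply/bigmax_leqP => k _; have h := hz k; by rewrite -ltnS (ltn_predK h).
    have h2 : blk t (g (i, k1)) <= phi i by rewrite /phi; exact: (leq_bigmax (F := fun k : 'I_m => blk t (g (i, k))) k1).
    lia. }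
  have mono : forall p x, path T x p -> phi (last x p) <= phi x.
    elim => //= y p IH x /andP [txy hp]; apply: leq_trans (IH _ hp) (ltnW (arc _ _ txy)).
  apply: nacyc => x p hp hl; case: p hp hl => //= y p /andP [txy hp] hl.
  have := mono p y hp; rewrite hl; have := arc _ _ txy; lia.
Qed.
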